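(* Let $k$ be even and $d\ge1$. For any $k$-XOR instance $\Phi$ on $n$ variables consisting of $m\ge1$ constraints on distinct tuples, and any assignment $x\in\{\pm1\}^n$, $$\Big|\mathrm{sat}_\Phi(x)-\frac12\Big|\le\frac{1}{2m}\Big[\|R^{\Phi,d}_{\mathrm{norm}}\|\cdot\sum_{I\in[n]^{kd/2}}\mathrm{hist}(I)!\Big]^{1/d}.$$
   Context: A $k$-XOR instance $\Phi$ is a set of constraints $C_{S_1},\dots,C_{S_m}$ with distinct $S_a=(s_1,\dots,s_k)\in[n]^k$, where $C_S$ is $\prod_{i=1}^kx_{s_i}=\eta_S$ with $\eta_S\in\{\pm1\}$; $\mathrm{sat}_\Phi(x)$ is the fraction of constraints satisfied by $x$. Constraint tensor: $T_S=\eta_{S}$ if $S=S_a$ for some $a$, else $0$. $\|\cdot\|$ is the spectral norm. $M^\Phi$ is the $n^{k/2}\times n^{k/2}$ matrix indexed by $[n]^{k/2}$ with $M^\Phi_{U,V}=T_{(U,V)}$ (concatenation); $S^\Phi=\frac12(M^\Phi+(M^\Phi)^\top)$. $S^{\Phi,d}$ is indexed by $[n]^{kd/2}$, tuples written as concatenations $(U_1,\dots,U_d)$ of blocks in $[n]^{k/2}$, with $S^{\Phi,d}_{(U_1,\dots,U_d),(V_1,\dots,V_d)}=\prod_{s=1}^dS^\Phi_{U_s,V_s}$. For $I=(i_1,\dots,i_q)$ and $\pi\in\mathbb{S}_q$, $\pi(I)=(i_{\pi(1)},\dots,i_{\pi(q)})$; $R^{\Phi,d}_{I,J}=\frac{1}{((kd/2)!)^2}\sum_{\pi,\sigma\in\mathbb{S}_{kd/2}}S^{\Phi,d}_{\pi(I),\sigma(J)}$.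 $\mathrm{hist}(I)=(\alpha_1,\dots,\alpha_n)$ with $\alpha_i$ the number of occurrences of $i$ in $I$, $\mathrm{hist}(I)!=\prod_i\alpha_i!$. $D_{\mathrm{hist}}$ is diagonal with $(I,I)$ entry $\sqrt{\mathrm{hist}(I)!}$, and $R^{\Phi,d}_{\mathrm{norm}}=D_{\mathrm{hist}}^{-1}R^{\Phi,d}D_{\mathrm{hist}}^{-1}$. *)

(* Defs.v *)
From HB Require Import structures.
From mathcomp Require Import all_boot all_order all_algebra all_fingroup.
From mathcomp Require Import all_classical all_reals all_analysis.
Set Implicit Arguments. Unset Strict Implicit. Unset Printing Implicit Defensive.
Import Order.TTheory GRing.Theory Num.Theory.
Local Open Scope classical_set_scope.
Local Open Scope ring_scope.

Section KXOR.
Variables (R : realType) (n m k : nat).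
(* A k-XOR instance: constraint tuples S a (distinct, imposed in the theorem)
   with right-hand sides eta a in {+1,-1}. *)
Variables (S : 'I_m -> k.-tuple 'I_n) (eta : 'I_m -> R).

Definition sat (x : 'I_n -> R) : R :=
  (#|[set a : 'I_m | \prod_(i < k) x (tnth (S a) i) == eta a]|)%:R / m%:R.

(* constraint tensor T_s = eta_a if s = S_a, else 0 (tuples are distinct) *)
Definition ctensor (s : seq 'I_n) : R := \sum_(a < m | val (S a) == s) eta a.

Definition Mphi (U V : seq 'I_n) : R := ctensor (U ++ V).

Definition Sphi (U V : seq 'I_n) : R := 2^-1 * (Mphi U V + Mphi V U).

Definition block (h s : nat) (I : seq 'I_n) : seq 'I_n := take h (drop (s * h) I).

Definition Sphid (d : nat) (I J : seq 'I_n) : R :=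
  \prod_(s < d) Sphi (block k./2 s I) (block k./2 s J).

Definition tperm (q : nat) (pi : 'S_q) (I : q.-tuple 'I_n) : q.-tuple 'I_n :=
  [tuple tnth I (pi j) | j < q].

Definition Rphid (d : nat) (I J : ((k./2) * d).-tuple 'I_n) : R :=
  (((k./2 * d)`!)%:R ^+ 2)^-1 *
  \sum_(pi : 'S_(k./2 * d)) \sum_(sg : 'S_(k./2 * d))
     Sphid d (tperm pi I) (tperm sg J).

Definition histfact (I : seq 'I_n) : nat := \prod_(i : 'I_n) (count_mem i I)`!.

Definition Rnorm (d : nat) (I J : ((k./2) * d).-tuple 'I_n) : R :=
  Rphid I J / (Num.sqrt (histfact I)%:R * Num.sqrt (histfact J)%:R).
End KXOR.

Definition specnorm (R : realType) (T : finType) (A : T -> T -> R) : R :=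
  sup [set y : R | exists v : T -> R,
         \sum_(i : T) v i ^+ 2 = 1 /\
         y = Num.sqrt (\sum_(i : T) (\sum_(j : T) A i j * v j) ^+ 2)].

(* Main.v *)
Require Import Defs.
From HB Require Import structures.
From mathcomp Require Import all_boot all_order all_algebra all_fingroup.
From mathcomp Require Import all_classical all_reals all_analysis.
From mathcomp Require Import ring lra.
Import Order.TTheory GRing.Theory Num.Theory.
Local Open Scope ring_scope.

Section Tup.
Variable T : finType.

Lemma tk_size L1 L2 (I : (L1 + L2).-tuple T) : size (take L1 I) == L1.
Proof. by rewrite size_takel ?size_tuple ?leq_addr. Qed.
Lemma dp_size L1 L2 (I : (L1 + L2).-tuple T) : size (drop L1 I) == L2.
Proof. by rewrite size_drop size_tuple addKn. Qed.

Lemma sum_tuple_cat (V : nmodType) L1 L2 (f : seq T -> V) :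
  \sum_(I : (L1 + L2).-tuple T) f I =
  \sum_(U : L1.-tuple T) \sum_(W : L2.-tuple T) f (U ++ W).
Proof.
rewrite pair_big /=.
rewrite (reindex (fun p : L1.-tuple T * L2.-tuple T => cat_tuple p.1 p.2)) //=.
exists (fun I => (Tuple (@tk_size L1 L2 I), Tuple (@dp_size L1 L2 I))).
  move=> [U W] _ /=; congr pair; apply: val_inj => /=.
    by rewrite take_size_cat ?size_tuple.
  by rewrite drop_size_cat ?size_tuple.
by move=> I _; apply: val_inj => /=; rewrite cat_take_drop.
Qed.

Lemma sum_tuple_eq (V : nmodType) L1 L2 (f : seq T -> V) : L1 = L2 ->
  \sum_(I : L1.-tuple T) f I = \sum_(I : L2.-tuple T) f I.
Proof. by move=> ->. Qed.

Lemma sum_tuple0 (V : nmodType) (f : seq T -> V) :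
  \sum_(I : 0.-tuple T) f I = f [::].
Proof.
rewrite (big_pred1 [tuple]) //= => I; apply/esym/eqP; apply: val_inj.
by rewrite /= tuple0.
Qed.

End Tup.

Section Blk.
Variable T : finType.
Definition blk (h s : nat) (I : seq T) : seq T := take h (drop (s * h) I).

Lemma blk0 h U W : size U = h -> blk h 0 (U ++ W) = U.
Proof. by move=> sU; rewrite /blk mul0n drop0 take_size_cat. Qed.

Lemma blkS h s U W : size U = h -> blk h s.+1 (U ++ W) = blk h s W.
Proof.
by move=> sU; rewrite /blk mulSn addnC -drop_drop (drop_size_cat _ sU).
Qed.

Lemma sum_prod_blocks (V : comNzRingType) h d (G : nat -> seq T -> V) :
  \sum_(I : (h * d).-tuple T) \prod_(s < d) G s (blk h s I) =
  \prod_(s < d) \sum_(U : h.-tuple T) G s U.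
Proof.
elim: d G => [|d IH] G.
  under eq_bigr do rewrite big_ord0.
  rewrite (@sum_tuple_eq T V _ 0 (fun _ => 1) (muln0 h)) (@sum_tuple0 T V (fun _ => 1)).
  by rewrite big_ord0.
rewrite (@sum_tuple_eq T V _ (h + h * d) (fun I => \prod_(s < d.+1) G s (blk h s I)) (mulnS h d)).
rewrite (@sum_tuple_cat T V h (h * d) (fun I => \prod_(s < d.+1) G s (blk h s I))).
rewrite big_ord_recl -(IH (fun s => G s.+1)) mulr_suml.
apply: eq_bigr => U _; rewrite mulr_sumr; apply: eq_bigr => W _.
rewrite big_ord_recl blk0 ?size_tuple //; congr (_ * _).
by apply: eq_bigr => s _; rewrite lift0 blkS ?size_tuple.
Qed.

Lemma prod_blocks (V : comNzRingType) h d (x : T -> V) (I : seq T) :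
  size I = (h * d)%N ->
  \prod_(i <- I) x i = \prod_(s < d) \prod_(i <- blk h s I) x i.
Proof.
elim: d I => [|d IH] I sI.
  by move: sI; rewrite muln0 => /size0nil ->; rewrite big_nil big_ord0.
rewrite -(cat_take_drop h I) big_cat big_ord_recl blk0; last first.
  by rewrite size_takel // sI leq_pmulr.
rewrite (IH (drop h I)); last by rewrite size_drop sI mulnS addKn.
congr (_ * _); apply: eq_bigr => s _.
by rewrite lift0 blkS // size_takel // sI leq_pmulr.
Qed.
End Blk.

Lemma CS (R : realFieldType) (T : finType) (a b : T -> R) :
  (\sum_i a i * b i) ^+ 2 <= (\sum_i a i ^+ 2) * (\sum_i b i ^+ 2).
Proof.
set A := \sum_i a i ^+ 2; set B := \sum_i b i ^+ 2; set C := \sum_i a i * b i.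
have B0 : 0 <= B by apply: sumr_ge0 => i _; apply: sqr_ge0.
have key : 0 <= B * (A * B - C ^+ 2).
  have -> : B * (A * B - C ^+ 2) = \sum_i (B * a i - C * b i) ^+ 2.
    rewrite (eq_bigr (fun i => B ^+ 2 * a i ^+ 2 - (2 * B * C) * (a i * b i)
       + C ^+ 2 * b i ^+ 2)); last by move=> i _; ring.
    rewrite big_split sumrB /= -!mulr_sumr -/A -/B -/C; ring.
  by apply: sumr_ge0 => i _; apply: sqr_ge0.
move: B0; rewrite le_eqVlt => /orP[/eqP B0|Bp].
  have bz : forall i, b i = 0.
    move=> i; apply/eqP; rewrite -sqrf_eq0; apply/eqP.
    by apply: (@psumr_eq0P _ T predT (fun i => b i ^+ 2)) => // j _; apply: sqr_ge0.
  rewrite /C (eq_bigr (fun _ => 0)) ?big1 // => [|i _]; last by rewrite bz mulr0.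
  by rewrite expr0n /= -B0 mulr0.
by move: key; rewrite pmulr_rge0 // subr_ge0.
Qed.

Lemma spec_bound (R : realType) (T : finType) (A : T -> T -> R) (w : T -> R) :
  `|\sum_i w i * \sum_j A i j * w j| <= specnorm A * \sum_i w i ^+ 2.
Proof.
set N2 := \sum_i w i ^+ 2.
have N20 : 0 <= N2 by apply: sumr_ge0 => i _; apply: sqr_ge0.
move: (N20); rewrite le_eqVlt => /orP[/eqP N0|Np].
  have wz : forall i, w i = 0.
    move=> i; apply/eqP; rewrite -sqrf_eq0; apply/eqP.
    by apply: (@psumr_eq0P _ T predT (fun i => w i ^+ 2)) => // j _; apply: sqr_ge0.
  rewrite big1 ?normr0 -?N0 ?mulr0 // => i _; by rewrite wz mul0r.
set N := Num.sqrt N2.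
have Ngt : 0 < N by rewrite sqrtr_gt0.
have NN : N ^+ 2 = N2 by rewrite sqr_sqrtr.
set v := fun i => w i / N.
set Aw := fun i => \sum_j A i j * w j.
set Av := fun i => \sum_j A i j * v j.
have AwE : forall i, Aw i = N * Av i.
  move=> i; rewrite /Aw /Av mulr_sumr; apply: eq_bigr => j _; rewrite /v.
  by field; rewrite gt_eqF.
have sv : \sum_i v i ^+ 2 = 1.
  rewrite /v (eq_bigr (fun i => w i ^+ 2 / N ^+ 2)) => [|i _]; last by rewrite expr_div_n.
  by rewrite -mulr_suml NN -/N2 divff // gt_eqF.
have ub : Num.sqrt (\sum_i Av i ^+ 2) <= specnorm A.
  apply: sup_upper_bound; last by exists v; split.
  split; first by exists (Num.sqrt (\sum_i Av i ^+ 2)); exists v; split.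
  exists (Num.sqrt (\sum_i \sum_j A i j ^+ 2)) => y [u [su ->]].
  rewrite ler_sqrt; last by apply: sumr_ge0 => i _; apply: sumr_ge0 => j _; apply: sqr_ge0.
  apply: ler_sum => i _; have := CS _ _ (A i) u; rewrite su mulr1; apply; idtac.
have cs := CS _ _ w Aw.
have : `|\sum_i w i * Aw i| <= N * Num.sqrt (\sum_i Aw i ^+ 2).
  rewrite -sqrtr_sqr /N -sqrtrM // ler_sqrt //.
  by rewrite mulr_ge0 // sumr_ge0 // => i _; apply: sqr_ge0.
have -> : \sum_i Aw i ^+ 2 = N ^+ 2 * \sum_i Av i ^+ 2.
  by rewrite mulr_sumr; apply: eq_bigr => i _; rewrite AwE exprMn.
rewrite sqrtrM ?sqr_ge0 // sqrtr_sqr (ger0_norm (ltW Ngt)) => h.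
apply: le_trans h _; rewrite -NN expr2 mulrA [X in _ <= X]mulrC.
rewrite ler_pM2l ?mulr_gt0 //.
Qed.

Lemma stepB (R : realType) n m k (S : 'I_m -> k.-tuple 'I_n) (eta : 'I_m -> R)
  (x : 'I_n -> R) h (hk : k = (h + h)%N) :
  \sum_(U : h.-tuple 'I_n) \sum_(V : h.-tuple 'I_n)
     (\prod_(i <- U) x i) * (\prod_(i <- V) x i) * Mphi S eta U V
  = \sum_a eta a * \prod_(i < k) x (tnth (S a) i).
Proof.
have E1 : forall U V : seq 'I_n,
   (\prod_(i <- U) x i) * (\prod_(i <- V) x i) * Mphi S eta U V =
   \sum_a eta a * ((val (S a) == U ++ V)%:R * \prod_(i <- U ++ V) x i).
  move=> U V; rewrite /Mphi [ctensor _ _ _]big_mkcond mulr_sumr /=.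
  apply: eq_bigr => a _; rewrite big_cat /=.
  by case: (_ == _) => /=; ring.
rewrite (eq_bigr (fun U : h.-tuple _ => \sum_(V : h.-tuple _) \sum_a eta a * ((val (S a) == val U ++ val V)%:R * \prod_(i <- val U ++ val V) x i))); last by move=> U _; apply: eq_bigr => V _; rewrite E1.
under eq_bigr do rewrite exchange_big /=.
rewrite exchange_big /=; apply: eq_bigr => a _.
under eq_bigr do rewrite -mulr_sumr.
rewrite -mulr_sumr; congr (_ * _).
rewrite -(@sum_tuple_cat _ R h h (fun W => (val (S a) == W)%:R * \prod_(i <- W) x i)).
rewrite -(@sum_tuple_eq _ R k (h + h) (fun W => (val (S a) == W)%:R * \prod_(i <- W) x i) hk).
rewrite (bigD1 (S a)) //= eqxx mul1r [X in _ + X]big1 ?addr0 ?big_tuple //.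
by move=> W; rewrite val_eqE eq_sym => /negbTE ->; rewrite mul0r.
Qed.

Lemma stepC (R : realType) n m k (S : 'I_m -> k.-tuple 'I_n) (eta : 'I_m -> R)
  (x : 'I_n -> R) h (hk : k = (h + h)%N) :
  \sum_(U : h.-tuple 'I_n) \sum_(V : h.-tuple 'I_n)
     (\prod_(i <- U) x i) * (\prod_(i <- V) x i) * Sphi S eta U V
  = \sum_a eta a * \prod_(i < k) x (tnth (S a) i).
Proof.
rewrite -(stepB _ _ _ _ S eta x _ hk).
set F := fun U V : h.-tuple 'I_n =>
   (\prod_(i <- U) x i) * (\prod_(i <- V) x i) * Mphi S eta U V.
have E : forall U V : h.-tuple 'I_n,
   (\prod_(i <- U) x i) * (\prod_(i <- V) x i) * Sphi S eta U V =
   2^-1 * (F U V + F V U).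
  by move=> U V; rewrite /F /Sphi; ring.
rewrite (eq_bigr (fun U => \sum_V 2^-1 * (F U V + F V U))); last first.
  by move=> U _; apply: eq_bigr => V _; rewrite E.
under eq_bigr do rewrite -mulr_sumr big_split /=.
rewrite -mulr_sumr big_split /= [X in _ * (_ + X) = _]exchange_big /=.
rewrite /F -mulr2n; set X := (\sum_(_ : _) _).
rewrite mulr2n; lra.
Qed.

Lemma stepD (R : realType) n m k (S : 'I_m -> k.-tuple 'I_n) (eta : 'I_m -> R)
  (x : 'I_n -> R) d (hk : k = (k./2 + k./2)%N) :
  \sum_(I : (k./2 * d).-tuple 'I_n) \sum_(J : (k./2 * d).-tuple 'I_n)
     (\prod_(i <- I) x i) * (\prod_(i <- J) x i) * Sphid S eta d I J
  = (\sum_a eta a * \prod_(i < k) x (tnth (S a) i)) ^+ d.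
Proof.
set h := k./2.
set F := fun U V : seq 'I_n =>
   (\prod_(i <- U) x i) * (\prod_(i <- V) x i) * Sphi S eta U V.
have E : forall I J : (h * d).-tuple 'I_n,
  (\prod_(i <- I) x i) * (\prod_(i <- J) x i) * Sphid S eta d I J =
  \prod_(s < d) F (blk _ h s I) (blk _ h s J).
  move=> I J; rewrite (prod_blocks _ _ h d x _ (size_tuple I)) (prod_blocks _ _ h d x _ (size_tuple J)).
  by rewrite /Sphid -!big_split.
rewrite (eq_bigr (fun I : (h * d).-tuple 'I_n =>
   \prod_(s < d) \sum_(V : h.-tuple 'I_n) F (blk _ h s I) V)); last first.
  move=> I _; rewrite -(@sum_prod_blocks _ R h d (fun s V => F (blk _ h s I) V)).
  by apply: eq_bigr => J _; rewrite E.
rewrite (@sum_prod_blocks _ R h d (fun s U => \sum_(V : h.-tuple 'I_n) F U V)).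
rewrite prodr_const card_ord; congr (_ ^+ _).
by rewrite -(stepC _ _ _ _ S eta x _ hk).
Qed.

Lemma stepE (R : realType) n m k (S : 'I_m -> k.-tuple 'I_n) (eta : 'I_m -> R)
  (x : 'I_n -> R) d :
  \sum_(I : (k./2 * d).-tuple 'I_n) \sum_(J : (k./2 * d).-tuple 'I_n)
     (\prod_(i <- I) x i) * (\prod_(i <- J) x i) * Rphid S eta I J
  = \sum_(I : (k./2 * d).-tuple 'I_n) \sum_(J : (k./2 * d).-tuple 'I_n)
     (\prod_(i <- I) x i) * (\prod_(i <- J) x i) * Sphid S eta d I J.
Proof.
set L := (k./2 * d)%N.
set Q := (X in _ = X).
set y := fun I : L.-tuple 'I_n => \prod_(i <- I) x i.
set c := (((L`!)%:R ^+ 2)^-1 : R).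
have Hz : forall (p : 'S_L) (I : L.-tuple 'I_n), y (Defs.tperm p I) = y I.
  move=> p I; rewrite /y !big_tuple; under eq_bigr => j _ do rewrite tnth_mktuple.
  by symmetry; rewrite (reindex_inj (@perm_inj _ p)).
have Hinj : forall p : 'S_L, injective (@Defs.tperm n L p).
  move=> p I J e; apply: eq_from_tnth => j.
  have := congr1 (fun t => tnth t ((p^-1)%g j)) e.
  by rewrite !tnth_mktuple permKV.
have Hpq : forall p s : 'S_L, \sum_(I : L.-tuple 'I_n) \sum_(J : L.-tuple 'I_n)
     y I * y J * Sphid S eta d (Defs.tperm p I) (Defs.tperm s J) = Q.
  move=> p s; rewrite /Q [RHS](reindex_inj (Hinj p)); apply: eq_bigr => I _.
  rewrite [RHS](reindex_inj (Hinj s)); apply: eq_bigr => J _.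
  by rewrite -!/(y _) !Hz.
have E1 : forall I J : L.-tuple 'I_n, y I * y J * Rphid S eta I J =
   \sum_(p : 'S_L) \sum_(s : 'S_L) c * (y I * y J * Sphid S eta d (Defs.tperm p I) (Defs.tperm s J)).
  move=> I J; rewrite /Rphid -/c !mulr_sumr; apply: eq_bigr => p _.
  rewrite !mulr_sumr; apply: eq_bigr => s _.
  ring.
set f := fun (p s : 'S_L) (I J : L.-tuple 'I_n) =>
   y I * y J * Sphid S eta d (Defs.tperm p I) (Defs.tperm s J).
have E2 : \sum_(I : L.-tuple 'I_n) \sum_(J : L.-tuple 'I_n) y I * y J * Rphid S eta I J
   = c * \sum_(I : L.-tuple 'I_n) \sum_(J : L.-tuple 'I_n) \sum_(p : 'S_L) \sum_(s : 'S_L) f p s I J.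
  rewrite mulr_sumr; apply: eq_bigr => I _; rewrite mulr_sumr; apply: eq_bigr => J _.
  rewrite E1 mulr_sumr; apply: eq_bigr => p _; rewrite mulr_sumr; by apply: eq_bigr.
have Ex : \sum_(I : L.-tuple 'I_n) \sum_(J : L.-tuple 'I_n) \sum_(p : 'S_L) \sum_(s : 'S_L) f p s I J
   = \sum_(p : 'S_L) \sum_(s : 'S_L) \sum_(I : L.-tuple 'I_n) \sum_(J : L.-tuple 'I_n) f p s I J.
  rewrite (eq_bigr (fun I => \sum_(p : 'S_L) \sum_(J : L.-tuple 'I_n) \sum_(s : 'S_L) f p s I J)); last first.
    by move=> I _; rewrite exchange_big.
  rewrite exchange_big /=; apply: eq_bigr => p _.
  rewrite (eq_bigr (fun I => \sum_(s : 'S_L) \sum_(J : L.-tuple 'I_n) f p s I J)); last first.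
    by move=> I _; rewrite exchange_big.
  by rewrite exchange_big.
have E3 : \sum_(p : 'S_L) \sum_(s : 'S_L) \sum_(I : L.-tuple 'I_n) \sum_(J : L.-tuple 'I_n) f p s I J
   = \sum_(p : 'S_L) \sum_(s : 'S_L) Q.
  by apply: eq_bigr => p _; apply: eq_bigr => s _; rewrite -(Hpq p s).
rewrite -/y E2 Ex E3.
rewrite !sumr_const card_Sn /c -mulrnA -(mulr_natl Q) natrM -expr2.
have F0 : (L`!%:R : R) != 0 by rewrite pnatr_eq0 -lt0n fact_gt0.
by rewrite mulKf // expf_neq0.
Qed.

Lemma pm1_prod (R : realType) (I : Type) (r : seq I) (F : I -> R) :
  (forall i, F i = 1 \/ F i = -1) ->
  \prod_(i <- r) F i = 1 \/ \prod_(i <- r) F i = -1.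
Proof.
move=> hF; apply: (big_ind (fun v : R => v = 1 \/ v = -1)); first by left.
  move=> a b [->|->] [->|->]; rewrite ?mulr1 ?mul1r ?mulN1r ?opprK; first [by left | by right].
by move=> i _; apply: hF.
Qed.

Lemma stepA (R : realType) n m k (S : 'I_m -> k.-tuple 'I_n) (eta : 'I_m -> R)
  (x : 'I_n -> R) (hm : (0 < m)%N) (heta : forall a, eta a = 1 \/ eta a = -1)
  (hx : forall i, x i = 1 \/ x i = -1) :
  sat S eta x - 2^-1 =
  (2 * m%:R)^-1 * \sum_a eta a * \prod_(i < k) x (tnth (S a) i).
Proof.
rewrite /sat.
rewrite -sumr_const big_mkcond /=.
rewrite (eq_bigr (fun a => 2^-1 * (1 + eta a * \prod_(i < k) x (tnth (S a) i)))); last first.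
  move=> a _; rewrite unfold_in /in_set /= asboolb.
  have [hp|hp] := pm1_prod _ _ (index_enum 'I_k) (fun i => x (tnth (S a) i)) (fun i => hx _);
  rewrite hp; case: (heta a) => ->; case: eqP => E; try (exfalso; apply: E; done); lra.
rewrite -mulr_sumr big_split /= sumr_const card_ord.
have m0 : (m%:R : R) != 0 by rewrite pnatr_eq0 -lt0n.
field; done.
Qed.

Theorem mainTheorem7 (R : realType) (k d n m : nat)
  (hk : ~~ odd k) (hd : (0 < d)%N) (hm : (0 < m)%N)
  (S : 'I_m -> k.-tuple 'I_n) (hS : injective S)
  (eta : 'I_m -> R) (heta : forall a, eta a = 1 \/ eta a = -1)
  (x : 'I_n -> R) (hx : forall i, x i = 1 \/ x i = -1) :
  `| sat S eta x - 2^-1 | <=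
    (2 * m%:R)^-1 *
    (specnorm (@Rnorm R n m k S eta d) *
      (\sum_(I : ((k./2) * d).-tuple 'I_n) (histfact I)%:R)) `^ (d%:R^-1).
Proof.
have hk2 : k = (k./2 + k./2)%N.
  by rewrite addnn -{1}(odd_double_half k) (negbTE hk) add0n.
set P := \sum_a eta a * \prod_(i < k) x (tnth (S a) i).
set L := (k./2 * d)%N.
set z := fun I : L.-tuple 'I_n => \prod_(i <- I) x i.
set hf := fun I : L.-tuple 'I_n => ((histfact I)%:R : R).
set w := fun I : L.-tuple 'I_n => Num.sqrt (hf I) * z I.
have hfp : forall I, 0 < hf I.
  by move=> I; rewrite /hf ltr0n /histfact prodn_gt0 // => i; apply: fact_gt0.
have z2 : forall I, z I ^+ 2 = 1.
  move=> I; rewrite /z -prodrXl big1 // => i _.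
  by case: (hx i) => ->; rewrite ?expr1n ?sqrrN ?expr1n.
have Hw : \sum_(I : L.-tuple 'I_n) w I * \sum_(J : L.-tuple 'I_n) Rnorm S eta I J * w J
    = P ^+ d.
  rewrite -(stepD _ _ _ _ S eta x d hk2) -(stepE _ _ _ _ S eta x d).
  apply: eq_bigr => I _; rewrite mulr_sumr; apply: eq_bigr => J _.
  rewrite /w /Rnorm -/(hf I) -/(hf J) -/(z I) -/(z J).
  have h1 : Num.sqrt (hf I) != 0 by rewrite gt_eqF // sqrtr_gt0.
  have h2 : Num.sqrt (hf J) != 0 by rewrite gt_eqF // sqrtr_gt0.
  by field; rewrite h1 h2.
have Hs : \sum_(I : L.-tuple 'I_n) w I ^+ 2 = \sum_(I : L.-tuple 'I_n) hf I.
  apply: eq_bigr => I _; rewrite /w exprMn z2 mulr1 sqr_sqrtr //.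
have Hb := spec_bound _ _ (@Rnorm R n m k S eta d) w.
move: Hb; rewrite Hw Hs normrX => Hb'.
rewrite (stepA _ _ _ _ S eta x hm heta hx) -/P normrM.
rewrite ger0_norm; last by rewrite invr_ge0 mulr_ge0 // ler0n.
rewrite ler_pM2l; last by rewrite invr_gt0 mulr_gt0 // ltr0n.
set B := specnorm _ * _.
have B0 : 0 <= B by apply: le_trans Hb'; apply: exprn_ge0.
have d0 : (d%:R : R) != 0 by rewrite pnatr_eq0 -lt0n.
have -> : `|P| = (`|P| ^+ d) `^ (d%:R^-1) by rewrite -powR_mulrn // -powRrM mulfV // powRr1.
apply: ge0_ler_powR => //.
by rewrite nnegrE exprn_ge0.
Qed.
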